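(* Let $(M,g)$ be a Lorentzian manifold of dimension $n+2$, $p\in M$, and let $T_{abcd}$ be a rank 4 tensor at $p$ with $T_{abcd}=-T_{bacd}=T_{cdab}$. Suppose there is a null frame $(\ell,n,m_3,\dots,m_{n+2})$ of $T_pM$ with respect to which all frame components of $T_{abcd}$ of strictly positive boost weight vanish (i.e. $T$ is of primary alignment type II or more special). Let $\mathsf T:\wedge^2T_pM\to\wedge^2T_pM$, $F^{ab}\mapsto \tfrac12 T^{ab}{}_{cd}F^{cd}$, and $\mathsf T^s:S^2(T_pM)\to S^2(T_pM)$, $Z^{ab}\mapsto T^{a}{}_{c}{}^{b}{}_{d}Z^{cd}$. If both $\mathsf T$ and $\mathsf T^s$ are nilpotent, then $T_{abcd}$ is of type III or N, i.e. a null frame exists in which all components of $T_{abcd}$ of boost weight $0$, $1$ and $2$ vanish.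
   Context: A null frame $(\ell,n,m_i)$ consists of null vectors $\ell,n$ with $g(\ell,n)=1$ and orthonormal spacelike vectors $m_i$ orthogonal to $\ell,n$. Frame index $0$ refers to $\ell$, index $1$ to $n$, and $i,j,\dots$ to the $m_i$. The boost weight of a frame component $T_{A_1A_2A_3A_4}$ is the number of indices equal to $0$ minus the number of indices equal to $1$. $\wedge^2T_pM$ denotes contravariant bivectors and $S^2(T_pM)$ symmetric contravariant 2-tensors at $p$. *)

(* Defs.v *)
From HB Require Import structures.
From mathcomp Require Import all_boot all_order all_algebra.
From mathcomp Require Import reals.
Set Implicit Arguments. Unset Strict Implicit. Unset Printing Implicit Defensive.
Import Order.TTheory GRing.Theory Num.Theory.
Local Open Scope ring_scope.

(* Everything happens in the tangent space T_pM, identified with R^(n+2) via a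
   coordinate basis; the metric g_p is the Gram matrix G (g(u,v) = u^T G v). *)

Section Defs.
Variable R : realType.
Variable n : nat.
Notation N := n.+2.

Definition minkowski : 'M[R]_N :=
  \matrix_(i, j) if i == j then (if val i == 0%N then -1 else 1) else 0.

Definition lorentzian (G : 'M[R]_N) : Prop :=
  G^T = G /\ exists P : 'M[R]_N, P \in unitmx /\ P^T *m G *m P = minkowski.

(* Gram matrix of a null frame (l, n, m_3, ..., m_{n+2}); frame index 0 is l,
   1 is n, indices >= 2 are the m_i. *)
Definition null_gram : 'M[R]_N :=
  \matrix_(A, B)
    if ((val A == 0%N) && (val B == 1%N)) || ((val A == 1%N) && (val B == 0%N))
    then 1
    else if (A == B) && (1 < val A)%N then 1 else 0.

Definition null_frame (G E : 'M[R]_N) : Prop := E^T *m G *m E = null_gram.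

Definition tensor4 := 'I_N -> 'I_N -> 'I_N -> 'I_N -> R.

Definition riemann_like_sym (T : tensor4) : Prop :=
  (forall a b c d, T a b c d = - T b a c d) /\
  (forall a b c d, T a b c d = T c d a b).

Definition frame_comp (T : tensor4) (E : 'M[R]_N) (A B C D : 'I_N) : R :=
  \sum_a \sum_b \sum_c \sum_d T a b c d * E a A * E b B * E c C * E d D.

Definition bw1 (A : 'I_N) : int :=
  if val A == 0%N then 1 else if val A == 1%N then -1 else 0.

Definition boost_weight (A B C D : 'I_N) : int := bw1 A + bw1 B + bw1 C + bw1 D.

Definition Top (G : 'M[R]_N) (T : tensor4) (F : 'M[R]_N) : 'M[R]_N :=
  \matrix_(a, b) (2^-1 * \sum_e \sum_f \sum_c \sum_d
      invmx G a e * invmx G b f * T e f c d * F c d).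

Definition Tsop (G : 'M[R]_N) (T : tensor4) (Z : 'M[R]_N) : 'M[R]_N :=
  \matrix_(a, b) (\sum_e \sum_f \sum_c \sum_d
      invmx G a e * invmx G b f * T e c f d * Z c d).

Definition Top_nilpotent (G : 'M[R]_N) (T : tensor4) : Prop :=
  exists k : nat, forall F : 'M[R]_N, F^T = - F -> iter k (Top G T) F = 0.

Definition Tsop_nilpotent (G : 'M[R]_N) (T : tensor4) : Prop :=
  exists k : nat, forall Z : 'M[R]_N, Z^T = Z -> iter k (Tsop G T) Z = 0.

End Defs.

(* Main.v *)
Require Import Defs.
From HB Require Import structures.
From mathcomp Require Import all_boot all_order all_algebra.
From mathcomp Require Import reals zify ring lra.
Import Order.TTheory GRing.Theory Num.Theory.
Local Open Scope ring_scope.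

Section PartB.
Variable R : realType.
Variable n : nat.
Local Notation N := n.+2.

Definition o0 : 'I_N := ord0.
Definition o1 : 'I_N := lift ord0 ord0.
Definition sp (i : 'I_n) : 'I_N := lift ord0 (lift ord0 i).

Lemma ordP3 (A : 'I_N) : A = o0 \/ A = o1 \/ exists i, A = sp i.
Proof.
case: A => [[|[|m]] Hm].
- by left; apply: val_inj.
- by right; left; apply: val_inj.
- right; right; have Hm' : (m < n)%N by [].
  by exists (Ordinal Hm'); apply: val_inj.
Qed.

Lemma o01 : (o0 == o1) = false. Proof. by []. Qed.
Lemma o10 : (o1 == o0) = false. Proof. by []. Qed.
Lemma sp0 i : (sp i == o0) = false. Proof. by []. Qed.
Lemma sp1 i : (sp i == o1) = false. Proof. by []. Qed.
Lemma s0p i : (o0 == sp i) = false. Proof. by []. Qed.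
Lemma s1p i : (o1 == sp i) = false. Proof. by []. Qed.
Lemma spE i j : (sp i == sp j) = (i == j).
Proof. by rewrite /sp !(inj_eq (@lift_inj _ _)). Qed.

Lemma bw0 : bw1 o0 = 1. Proof. by []. Qed.
Lemma bw1' : bw1 o1 = -1. Proof. by []. Qed.
Lemma bwsp i : bw1 (sp i) = 0. Proof. by []. Qed.

Definition sg (A : 'I_N) : 'I_N := if A == o0 then o1 else if A == o1 then o0 else A.
Lemma sg0 : sg o0 = o1. Proof. by []. Qed.
Lemma sg1 : sg o1 = o0. Proof. by []. Qed.
Lemma sgsp i : sg (sp i) = sp i. Proof. by rewrite /sg sp0 sp1. Qed.
Lemma sgK : involutive sg.
Proof. move=> A; case: (ordP3 A) => [->|[->|[i ->]]] //; by rewrite !sgsp. Qed.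
Lemma sg_inj : injective sg. Proof. exact: inv_inj sgK. Qed.
Lemma bw_sg A : bw1 (sg A) = - bw1 A.
Proof. by case: (ordP3 A) => [->|[->|[i ->]]] //; rewrite sgsp bwsp oppr0. Qed.

Definition wt (A B : 'I_N) : int := bw1 A + bw1 B.
Lemma wt_sg A B : wt (sg A) (sg B) = - wt A B.
Proof. by rewrite /wt !bw_sg opprD. Qed.
Lemma wtC A B : wt A B = wt B A. Proof. by rewrite /wt addrC. Qed.


Lemma exch4 (F : 'I_N -> 'I_N -> 'I_N -> 'I_N -> R) :
  \sum_a \sum_b \sum_c \sum_d F a b c d = \sum_c \sum_d \sum_a \sum_b F a b c d.
Proof.
transitivity (\sum_a \sum_c \sum_d \sum_b F a b c d).
  apply: eq_bigr => a _; rewrite exchange_big; apply: eq_bigr => c _.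
  by rewrite exchange_big.
rewrite exchange_big; apply: eq_bigr => c _; by rewrite exchange_big.
Qed.

Definition Lr (rho : tensor4 R n) (Z : 'M[R]_N) : 'M[R]_N :=
  \matrix_(A, B) \sum_c \sum_d rho (sg A) (sg B) c d * Z c d.
Lemma LrE rho Z A B : Lr rho Z A B = \sum_c \sum_d rho (sg A) (sg B) c d * Z c d.
Proof. by rewrite mxE. Qed.
Definition Vge (w : int) (Z : 'M[R]_N) := forall A B, wt A B < w -> Z A B = 0.
Definition Pw (w : int) (Z : 'M[R]_N) : 'M[R]_N :=
  \matrix_(A, B) if wt A B == w then Z A B else 0.
Definition pure (w : int) (Z : 'M[R]_N) := forall A B, wt A B != w -> Z A B = 0.
Definition ipF (X Z : 'M[R]_N) := \sum_A \sum_B X A B * Z A B.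

Lemma pure_Vge w Z : pure w Z -> Vge w Z.
Proof. move=> H A B Hl; apply: H; by rewrite lt_eqF. Qed.
Lemma Pw_pure w Z : pure w Z -> Pw w Z = Z.
Proof. move=> H; apply/matrixP => A B; rewrite mxE; case: eqP => // /eqP Hn; by rewrite H. Qed.
Lemma Pw_is_pure w Z : pure w (Pw w Z).
Proof. by move=> A B H; rewrite mxE (negbTE H). Qed.
Lemma Pw0 w : Pw w 0 = 0.
Proof. by apply/matrixP => A B; rewrite !mxE; case: ifP. Qed.
Lemma Pw_tr w Z : (Pw w Z)^T = Pw w Z^T.
Proof. by apply/matrixP => A B; rewrite !mxE wtC. Qed.
Lemma Pw_Z w a Z : Pw w (a *: Z) = a *: Pw w Z.
Proof. apply/matrixP => A B; rewrite !mxE; case: ifP => //; by rewrite mulr0. Qed.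
Lemma Pw_N w Z : Pw w (- Z) = - Pw w Z.
Proof. apply/matrixP => A B; rewrite !mxE; case: ifP => //; by rewrite oppr0. Qed.

Lemma mul_self_ge0 (x : R) : 0 <= x * x.
Proof. by rewrite -expr2 sqr_ge0. Qed.
Lemma trE (X : 'M[R]_N) a A B : X^T = a *: X -> X B A = a * X A B.
Proof. by move/matrixP/(_ A B); rewrite !mxE. Qed.
Lemma ipF0 X : ipF X 0 = 0.
Proof. by rewrite /ipF big1 // => A _; rewrite big1 // => B _; rewrite mxE mulr0. Qed.
Lemma ipF_pos X : ipF X X = 0 -> X = 0.
Proof.
move=> /eqP; rewrite /ipF psumr_eq0; last first.
  move=> A _; apply: sumr_ge0 => B _; exact: mul_self_ge0.
move=> /allP H; apply/matrixP => A B; rewrite mxE.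
have := H A (mem_index_enum _); rewrite implyTb psumr_eq0; last first.
  by move=> B' _; exact: mul_self_ge0.
move=> /allP /(_ B (mem_index_enum _)); rewrite implyTb mulf_eq0 orbb.
by move/eqP.
Qed.
Lemma ipF_Pw w Y Z : pure w Z -> ipF (Pw w Y) Z = ipF Y Z.
Proof.
move=> HZ; apply: eq_bigr => A _; apply: eq_bigr => B _; rewrite mxE.
case: eqP => // /eqP H; by rewrite HZ // !mulr0.
Qed.

Lemma iter_comp2 (T : Type) (f : T -> T) k x : iter k (f \o f) x = iter (k + k) f x.
Proof. elim: k => //= k IH; by rewrite addnS /= IH. Qed.

Lemma selfadj_nil (D : 'M[R]_N -> Prop) (Y : 'M[R]_N -> 'M[R]_N)
  (ip : 'M[R]_N -> 'M[R]_N -> R) k :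
  (forall X, D X -> D (Y X)) ->
  (forall X Z, D X -> D Z -> ip (Y X) Z = ip X (Y Z)) ->
  (forall X, ip X 0 = 0) ->
  (forall X, D X -> ip X X = 0 -> X = 0) ->
  (forall X, D X -> iter k Y X = 0) ->
  forall X, D X -> Y X = 0.
Proof.
move=> HD Hs H0 Hp.
have HDi : forall j X, D X -> D (iter j Y X).
  by move=> j X HX; elim: j => //= j IH; apply: HD.
have step : forall j, (forall X, D X -> iter j.+2 Y X = 0) ->
    (forall X, D X -> iter j.+1 Y X = 0).
  move=> j Hj X HX; apply: Hp; first exact: HDi.
  rewrite [X in ip X _]iterS Hs; [|exact: HDi|exact: HDi].
  by rewrite -iterS Hj // H0.
have down : forall j, (forall X, D X -> iter j.+1 Y X = 0) -> forall X, D X -> Y X = 0.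
  elim=> [|j IH] Hj; first exact: Hj.
  by apply: IH; apply: step.
case: k => [|k] Hn X HX; first exact: (Hn (Y X) (HD X HX)).
exact: (down k).
Qed.

Lemma skew_nil (D : 'M[R]_N -> Prop) (Y : 'M[R]_N -> 'M[R]_N)
  (ip : 'M[R]_N -> 'M[R]_N -> R) k :
  (forall X, D X -> D (Y X)) ->
  (forall X Z, D X -> D Z -> ip (Y X) Z = - ip X (Y Z)) ->
  (forall X, ip X 0 = 0) ->
  (forall X, D X -> ip X X = 0 -> X = 0) ->
  (forall X, D X -> iter k Y X = 0) ->
  forall X, D X -> Y X = 0.
Proof.
move=> HD Hs H0 Hp Hn.
have HDi : forall j X, D X -> D (iter j Y X).
  by move=> j X HX; elim: j => //= j IH; apply: HD.
have HYY : forall X, D X -> (Y \o Y) X = 0.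
  apply: (@selfadj_nil D (Y \o Y) ip k) => //.
  - by move=> X HX; exact: (HD _ (HD _ HX)).
  - move=> X Z HX HZ /=; rewrite (Hs _ _ (HD _ HX) HZ) (Hs _ _ HX (HD _ HZ)).
    by rewrite opprK.
  - move=> X HX; rewrite iter_comp2 iterD; exact: (Hn _ (HDi k X HX)).
move=> X HX; apply: Hp; first exact: HD.
by rewrite (Hs _ _ (HX) (HD _ HX)) (HYY X HX : Y (Y X) = 0) H0 oppr0.
Qed.

Lemma sum3 (f : 'I_N -> R) : \sum_A f A = f o0 + f o1 + \sum_i f (sp i).
Proof. by rewrite big_ord_recl big_ord_recl addrA. Qed.

Definition dmx (x y : 'I_N) (s : R) : 'M[R]_N :=
  \matrix_(c, d) (((c == x) && (d == y))%:R + s * ((c == y) && (d == x))%:R).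

Lemma sum_delta2 (g : 'I_N -> 'I_N -> R) x y :
  \sum_c \sum_d g c d * ((c == x) && (d == y))%:R = g x y.
Proof.
rewrite (bigD1 x) //= [X in _ + X]big1 ?addr0; last first.
  by move=> c /negbTE Hc; rewrite big1 // => d _; rewrite Hc mulr0.
rewrite (bigD1 y) //= [X in _ + X]big1 ?addr0; last first.
  by move=> d /negbTE Hd; rewrite Hd andbF mulr0.
by rewrite !eqxx mulr1.
Qed.

Lemma sum_dmx (g : 'I_N -> 'I_N -> R) x y s :
  \sum_c \sum_d g c d * dmx x y s c d = g x y + s * g y x.
Proof.
rewrite -(sum_delta2 g x y) -(sum_delta2 g y x) mulr_sumr -big_split /=.
apply: eq_bigr => c _; rewrite mulr_sumr -big_split /=; apply: eq_bigr => d _.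
rewrite mxE; ring.
Qed.

Lemma dmx_tr x y s : s * s = 1 -> (dmx x y s)^T = s *: dmx x y s.
Proof.
move=> Hs; apply/matrixP => c d; rewrite !mxE.
have -> : s * (((c == x) && (d == y))%:R + s * ((c == y) && (d == x))%:R) =
   s * ((c == x) && (d == y))%:R + (s * s) * ((c == y) && (d == x))%:R by ring.
rewrite Hs mul1r addrC; congr (_ + _); first by rewrite andbC.
by rewrite andbC.
Qed.

Lemma dmx_pure x y s w : wt x y = w -> pure w (dmx x y s).
Proof.
move=> Hxy c d Hcd; rewrite mxE.
have E1 : ((c == x) && (d == y)) = false.
  apply/negbTE; apply: contra Hcd => /andP[/eqP -> /eqP ->]; by apply/eqP.
have E2 : ((c == y) && (d == x)) = false.
  apply/negbTE; apply: contra Hcd => /andP[/eqP -> /eqP ->]; by rewrite wtC; apply/eqP.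
by rewrite E1 E2 mulr0 addr0.
Qed.

Definition ip1 (X Z : 'M[R]_N) := \sum_i X o0 (sp i) * Z o0 (sp i).

Lemma wt00 : wt o0 o0 = 2. Proof. by []. Qed.
Lemma wt01 : wt o0 o1 = 0. Proof. by []. Qed.
Lemma wt10 : wt o1 o0 = 0. Proof. by []. Qed.
Lemma wt11 : wt o1 o1 = -2. Proof. by []. Qed.
Lemma wt0s i : wt o0 (sp i) = 1. Proof. by []. Qed.
Lemma wts0 i : wt (sp i) o0 = 1. Proof. by []. Qed.
Lemma wt1s i : wt o1 (sp i) = -1. Proof. by []. Qed.
Lemma wts1 i : wt (sp i) o1 = -1. Proof. by []. Qed.
Lemma wtss i j : wt (sp i) (sp j) = 0. Proof. by []. Qed.
Definition wtE := (wt00, wt01, wt10, wt11, wt0s, wts0, wt1s, wts1, wtss).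

Lemma sum_pure1 (g : 'I_N -> 'I_N -> R) X : pure 1 X ->
  \sum_c \sum_d g c d * X c d =
  \sum_i (g o0 (sp i) * X o0 (sp i) + g (sp i) o0 * X (sp i) o0).
Proof.
move=> HX; rewrite big_split /= sum3 sum3 sum3.
rewrite (HX o0 o0) ?wtE // (HX o0 o1) ?wtE // (HX o1 o0) ?wtE // (HX o1 o1) ?wtE //.
rewrite [X in _ + (_ + X) + _]big1; last by move=> i _; rewrite HX ?mulr0 // wtE.
rewrite !mulr0 !add0r !addr0; congr (_ + _); apply: eq_bigr => i _.
rewrite sum3 (HX (sp i) o1) ?wtE // big1 ?mulr0 ?addr0 // => j _.
by rewrite HX ?mulr0 // wtE.
Qed.

Lemma ipF_C X Z : ipF X Z = ipF Z X.
Proof. apply: eq_bigr => A _; apply: eq_bigr => B _; by rewrite mulrC. Qed.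

Definition isp (A : 'I_N) := (A != o0) && (A != o1).
Lemma isp_sp i : isp (sp i). Proof. by []. Qed.
Lemma ispP A : isp A -> exists i, A = sp i.
Proof. by case: (ordP3 A) => [->|[->|[i ->]]] //; exists i. Qed.
Lemma isp_sg A : isp (sg A) = isp A.
Proof. by case: (ordP3 A) => [->|[->|[i ->]]] //; rewrite sgsp. Qed.
Definition SO (X : 'M[R]_N) := forall A B, ~~ (isp A && isp B) -> X A B = 0.
Lemma SO_pure X : SO X -> pure 0 X.
Proof.
move=> H A B Hw; apply: H; apply: contra Hw => /andP[/ispP[i ->] /ispP[j ->]].
by rewrite wtE.
Qed.
Lemma SO_sg X : SO X -> forall A B, X (sg A) (sg B) = X A B.
Proof.
move=> H A B; have [Hs|Hs] := boolP (isp A && isp B).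
  by case/andP: Hs => /ispP[i ->] /ispP[j ->]; rewrite !sgsp.
by rewrite !H // !isp_sg.
Qed.
Lemma dmx_SO i j s : SO (dmx (sp i) (sp j) s).
Proof.
move=> A B H; rewrite mxE.
have E1 : ((A == sp i) && (B == sp j)) = false.
  by apply/negbTE; apply: contra H => /andP[/eqP -> /eqP ->].
have E2 : ((A == sp j) && (B == sp i)) = false.
  by apply/negbTE; apply: contra H => /andP[/eqP -> /eqP ->].
by rewrite E1 E2 mulr0 addr0.
Qed.

Lemma sym0_sg X : pure 0 X -> X^T = X -> forall A B, X (sg A) (sg B) = X A B.
Proof.
move=> HX HT A B.
have HT' : X^T = 1 *: X by rewrite scale1r.
case: (ordP3 A) => [->|[->|[i ->]]]; case: (ordP3 B) => [->|[->|[j ->]]];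
  rewrite ?sg0 ?sg1 ?sgsp //;
  first [by rewrite (trE X 1 o0 o1 HT') mul1r | by rewrite (trE X 1 o1 o0 HT') mul1r
        | by rewrite HX ?wtE // HX ?wtE].
Qed.

Section Rho.
Variable rho : tensor4 R n.
Hypothesis rho_wt : forall A B c d, 0 < wt A B + wt c d -> rho A B c d = 0.
Hypothesis rho_pair : forall A B c d, rho A B c d = rho c d A B.
Hypothesis rho_swap : forall A B c d, rho B A c d = rho A B d c.

Lemma Lr_Vge w Z : Vge w Z -> Vge w (Lr rho Z).
Proof.
move=> HZ A B Hlt; rewrite mxE big1 // => c _; rewrite big1 // => d _.
have [Hp|Hn] := boolP (0 < wt (sg A) (sg B) + wt c d).
  by rewrite rho_wt // mul0r.
rewrite HZ ?mulr0 //; move: Hn; rewrite -leNgt wt_sg => Hn; lia.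
Qed.

Lemma Pw_L w Z : Vge w Z -> Pw w (Lr rho Z) = Pw w (Lr rho (Pw w Z)).
Proof.
move=> HZ; apply/matrixP => A B; rewrite !mxE; case: eqP => // HAB.
apply: eq_bigr => c _; apply: eq_bigr => d _; rewrite mxE; case: eqP => // /eqP Hcd.
have [Hl|Hg] := boolP (wt c d < w); first by rewrite HZ.
rewrite rho_wt ?mul0r // wt_sg HAB; move: Hg Hcd; rewrite -leNgt => Hg Hcd.
lia.
Qed.

Lemma Vge_iter w k Z : Vge w Z -> Vge w (iter k (Lr rho) Z).
Proof. by move=> H; elim: k => //= k IH; apply: Lr_Vge. Qed.

Lemma Pw_iter w k Z : Vge w Z ->
  Pw w (iter k (Lr rho) Z) = iter k (Pw w \o Lr rho) (Pw w Z).
Proof.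
move=> H; elim: k => //= k IH.
by rewrite Pw_L ?IH //; apply: Vge_iter.
Qed.

Lemma nil_block w k (Q : 'M[R]_N -> Prop) :
  (forall Z, Q Z -> iter k (Lr rho) Z = 0) ->
  forall X, Q X -> pure w X -> iter k (Pw w \o Lr rho) X = 0.
Proof.
move=> Hn X HQ HX; rewrite -(Pw_pure _ _ HX) -Pw_iter; last exact: pure_Vge.
by rewrite Hn // Pw0.
Qed.

Lemma Lr_tr Z : (Lr rho Z)^T = Lr rho Z^T.
Proof.
apply/matrixP => A B; rewrite !mxE exchange_big.
apply: eq_bigr => c _; apply: eq_bigr => d _; by rewrite rho_swap mxE.
Qed.

Lemma Lr_N Z : Lr rho (- Z) = - Lr rho Z.
Proof.
apply/matrixP => A B; rewrite !mxE -sumrN; apply: eq_bigr => c _.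
rewrite -sumrN; apply: eq_bigr => d _; by rewrite mxE mulrN.
Qed.

Lemma ipF_L (X Z : 'M[R]_N) : (forall A B, X (sg A) (sg B) = X A B) ->
  (forall A B, Z (sg A) (sg B) = Z A B) ->
  ipF (Lr rho X) Z = ipF X (Lr rho Z).
Proof.
move=> HX HZ; rewrite /ipF.
transitivity (\sum_A \sum_B \sum_c \sum_d rho A B c d * X c d * Z A B).
  rewrite (reindex_inj sg_inj); apply: eq_bigr => A _.
  rewrite (reindex_inj sg_inj); apply: eq_bigr => B _.
  rewrite mxE !sgK HZ mulr_suml; apply: eq_bigr => c _; by rewrite mulr_suml.
symmetry.
rewrite (reindex_inj sg_inj) exch4; apply: eq_bigr => A _.
rewrite (reindex_inj sg_inj); apply: eq_bigr => B _.
rewrite mxE !sgK HX mulr_sumr; apply: eq_bigr => c _; rewrite mulr_sumr.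
apply: eq_bigr => d _; rewrite (rho_pair c); ring.
Qed.
Lemma Lr_Z a Z : Lr rho (a *: Z) = a *: Lr rho Z.
Proof.
apply/matrixP => A B; rewrite !mxE mulr_sumr; apply: eq_bigr => c _.
rewrite mulr_sumr; apply: eq_bigr => d _; rewrite mxE; ring.
Qed.

Lemma block1 (s : R) k : s * s = 1 ->
  (forall Z, Z^T = s *: Z -> iter k (Lr rho) Z = 0) ->
  (forall j i, rho o1 (sp j) o0 (sp i) + s * rho o1 (sp j) (sp i) o0 =
     - (rho o1 (sp i) o0 (sp j) + s * rho o1 (sp i) (sp j) o0)) ->
  forall j i, rho o1 (sp j) o0 (sp i) + s * rho o1 (sp j) (sp i) o0 = 0.
Proof.
move=> Hs Hnil Hskew.
pose K j i := rho o1 (sp j) o0 (sp i) + s * rho o1 (sp j) (sp i) o0.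
pose D := fun X : 'M[R]_N => pure 1 X /\ X^T = s *: X.
have Lform : forall X, D X -> forall j,
    (Lr rho X) o0 (sp j) = \sum_i K j i * X o0 (sp i).
  move=> X [HX1 HX2] j; rewrite mxE sg0 sgsp sum_pure1 //; apply: eq_bigr => i _.
  rewrite (trE X s o0 (sp i) HX2).
  rewrite /K; ring.
have HY : forall X, D X -> (Pw 1 \o Lr rho) X = 0.
  apply: (@skew_nil D _ ip1 k).
  - move=> X [HX1 HX2]; split; first exact: Pw_is_pure.
    by rewrite /= Pw_tr Lr_tr HX2 Lr_Z Pw_Z.
  - move=> X Z HX HZ; rewrite /ip1 /=.
    transitivity (\sum_j \sum_i K j i * X o0 (sp i) * Z o0 (sp j)).
      apply: eq_bigr => j _; rewrite mxE wt0s eqxx Lform // mulr_suml //.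
    rewrite exchange_big -sumrN; apply: eq_bigr => i _.
    rewrite mxE wt0s eqxx Lform // mulr_sumr -sumrN; apply: eq_bigr => j _.
    rewrite /K Hskew; ring.
  - by move=> X; rewrite /ip1 big1 // => i _; rewrite mxE mulr0.
  - move=> X [HX1 HX2] /eqP; rewrite /ip1 psumr_eq0; last by move=> i _; exact: mul_self_ge0.
    move=> /allP Hall.
    have Hx : forall i, X o0 (sp i) = 0.
      move=> i; have := Hall i (mem_index_enum _); rewrite implyTb mulf_eq0 orbb.
      by move/eqP.
    apply/matrixP => A B; rewrite mxE.
    case: (ordP3 A) => [->|[->|[i ->]]]; case: (ordP3 B) => [->|[->|[j ->]]];
      rewrite ?Hx //;
      first [by rewrite (trE X s o0 (sp i) HX2) Hx mulr0 | by rewrite HX1 ?wtE].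
  - move=> X [HX1 HX2]; exact: (@nil_block 1 k (fun Z => Z^T = s *: Z)).
move=> j i.
have HD : D (dmx o0 (sp i) s) by split; [apply: dmx_pure; rewrite wt0s|exact: dmx_tr].
have := HY _ HD; move/matrixP/(_ o0 (sp j)); rewrite !mxE wt0s eqxx sg0 sgsp.
by rewrite sum_dmx.
Qed.

Lemma block0 (D Q : 'M[R]_N -> Prop) k :
  (forall Z, Q Z -> iter k (Lr rho) Z = 0) ->
  (forall X, D X -> Q X /\ pure 0 X) ->
  (forall X, D X -> D (Pw 0 (Lr rho X))) ->
  (forall X, D X -> forall A B, X (sg A) (sg B) = X A B) ->
  forall X, D X -> Pw 0 (Lr rho X) = 0.
Proof.
move=> Hnil HDQ HDp Hsg.
apply: (@selfadj_nil D (Pw 0 \o Lr rho) ipF k).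
- exact: HDp.
- move=> X Z HX HZ /=.
  have [_ pX] := HDQ X HX; have [_ pZ] := HDQ Z HZ.
  rewrite ipF_Pw // ipF_L; [|exact: Hsg|exact: Hsg].
  by rewrite [in RHS]ipF_C ipF_Pw // ipF_C.
- exact: ipF0.
- by move=> X _; apply: ipF_pos.
- move=> X HX; have [qX pX] := HDQ X HX; exact: (@nil_block 0 k Q).
Qed.

End Rho.


Lemma bwE A B C D : boost_weight A B C D = wt A B + wt C D.
Proof. by rewrite /boost_weight /wt !addrA. Qed.
Lemma bwE2 A B C D : boost_weight A C B D = wt A B + wt C D.
Proof. rewrite /boost_weight /wt; ring. Qed.

Lemma partB (tau : tensor4 R n) k1 k2 :
  riemann_like_sym tau ->
  (forall A B C D, 0 < boost_weight A B C D -> tau A B C D = 0) ->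
  (forall F, F^T = -F -> iter k1 (Lr (fun A B c d => 2^-1 * tau A B c d)) F = 0) ->
  (forall Z, Z^T = Z -> iter k2 (Lr (fun A B c d => tau A c B d)) Z = 0) ->
  forall A B C D, boost_weight A B C D = 0 -> tau A B C D = 0.
Proof.
move=> [Has Hpr] H2 Ht Hs.
have Has2 : forall a b c d, tau a b c d = - tau a b d c.
  by move=> a b c d; rewrite (Hpr a b c d) (Has c d a b) (Hpr d c a b).
have Zaa : forall a c d, tau a a c d = 0.
  move=> a c d; have := Has a a c d; lra.
have Zcc : forall a b c, tau a b c c = 0.
  move=> a b c; have := Has2 a b c c; lra.
pose rt := fun A B c d => 2^-1 * tau A B c d.
pose rs := fun A B c d => tau A c B d.
have rt_wt : forall A B c d, 0 < wt A B + wt c d -> rt A B c d = 0.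
  by move=> A B c d H; rewrite /rt H2 ?mulr0 // bwE.
have rt_pair : forall A B c d, rt A B c d = rt c d A B.
  by move=> A B c d; rewrite /rt Hpr.
have rt_swap : forall A B c d, rt B A c d = rt A B d c.
  by move=> A B c d; rewrite /rt Has Has2 opprK.
have rs_wt : forall A B c d, 0 < wt A B + wt c d -> rs A B c d = 0.
  by move=> A B c d H; rewrite /rs H2 // bwE2.
have rs_pair : forall A B c d, rs A B c d = rs c d A B.
  move=> A B c d.
  by rewrite /rs (Hpr A c B d) (Has B d A c) (Has2 d B A c) opprK (Hpr d B c A).
have rs_swap : forall A B c d, rs B A c d = rs A B d c.
  by move=> A B c d; rewrite /rs Hpr.
have S0 : forall X, pure 0 X -> X^T = X -> Pw 0 (Lr rs X) = 0.
  move=> X pX tX.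
  apply: (@block0 rs rs_wt rs_pair (fun X => pure 0 X /\ X^T = X)
      (fun Z => Z^T = Z) k2) => //.
  - by move=> Y [].
  - move=> Y [pY tY]; split; first exact: Pw_is_pure.
    by rewrite Pw_tr Lr_tr // tY.
  - by move=> Y [pY tY]; apply: sym0_sg.
have T01 : (dmx o0 o1 1)^T = dmx o0 o1 1 by rewrite dmx_tr ?mulr1 // scale1r.
have P01 : pure 0 (dmx o0 o1 1) by apply: dmx_pure.
have F1 : tau o1 o0 o0 o1 = 0.
  have := S0 _ P01 T01; move/matrixP/(_ o0 o1); rewrite !mxE wt01 eqxx sg0 sg1.
  by rewrite sum_dmx /rs Zaa mulr0 addr0.
have F2 : forall i j, tau (sp i) o0 (sp j) o1 + tau (sp i) o1 (sp j) o0 = 0.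
  move=> i j.
  have := S0 _ P01 T01; move/matrixP/(_ (sp i) (sp j)); rewrite !mxE wtss eqxx !sgsp.
  by rewrite sum_dmx /rs mul1r.
have F3 : forall j i, tau o1 (sp j) o0 (sp i) = 0.
  have Hnil : forall Z, Z^T = (-1) *: Z -> iter k1 (Lr rt) Z = 0.
    by move=> Z HZ; apply: Ht; rewrite HZ scaleN1r.
  have Hm : (-1 : R) * -1 = 1 by rewrite mulrNN mulr1.
  have key := @block1 rt rt_wt rt_swap (-1) k1 Hm Hnil.
  have Hsk : forall j i, rt o1 (sp j) o0 (sp i) + -1 * rt o1 (sp j) (sp i) o0 =
     - (rt o1 (sp i) o0 (sp j) + -1 * rt o1 (sp i) (sp j) o0).
    move=> j i; rewrite /rt.
    have a1 := Has2 o1 (sp j) (sp i) o0.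
    have a2 := Has2 o1 (sp i) (sp j) o0.
    have a3 : tau o1 (sp j) o0 (sp i) = tau (sp i) o0 (sp j) o1.
      by rewrite (Hpr o1 (sp j) o0 (sp i)) (Has o0 (sp i) o1 (sp j))
        (Has2 (sp i) o0 o1 (sp j)) opprK.
    have a4 : tau o1 (sp i) o0 (sp j) = tau (sp i) o1 (sp j) o0.
      by rewrite (Has o1 (sp i) o0 (sp j)) (Has2 (sp i) o1 o0 (sp j)) opprK.
    have a5 := F2 i j.
    lra.
  move=> j i; have := key Hsk j i; rewrite /rt.
  have a1 := Has2 o1 (sp j) (sp i) o0.
  lra.
have F4 : forall j i, tau o1 o0 (sp j) (sp i) = 0.
  have Hnil : forall Z, Z^T = 1 *: Z -> iter k2 (Lr rs) Z = 0.
    by move=> Z HZ; apply: Hs; rewrite HZ scale1r.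
  have key := @block1 rs rs_wt rs_swap 1 k2 (mulr1 1) Hnil.
  have Hsk : forall j i, rs o1 (sp j) o0 (sp i) + 1 * rs o1 (sp j) (sp i) o0 =
     - (rs o1 (sp i) o0 (sp j) + 1 * rs o1 (sp i) (sp j) o0).
    move=> j i; rewrite /rs.
    have a1 := Has2 o1 (sp i) (sp j) o0.
    have a2 := Has2 o1 (sp j) (sp i) o0.
    have a3 := Has2 o1 o0 (sp j) (sp i).
    have a4 := F3 i j. have a5 := F3 j i.
    lra.
  move=> j i; have := key Hsk j i; rewrite /rs.
  have a1 := Has2 o1 (sp i) (sp j) o0.
  have a4 := F3 i j.
  lra.
have T0 : forall X, SO X -> X^T = -X -> Pw 0 (Lr rt X) = 0.
  move=> X sX tX.
  apply: (@block0 rt rt_wt rt_pair (fun X => SO X /\ X^T = -X)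
      (fun Z => Z^T = -Z) k1) => //.
  - by move=> Y [sY tY]; split => //; exact: SO_pure.
  - move=> Y [sY tY]; split; last by rewrite Pw_tr Lr_tr // tY Lr_N Pw_N.
    have Hrt : forall c d, rt o1 o0 c d * Y c d = 0 /\ rt o0 o1 c d * Y c d = 0.
      move=> c d; have [Hcd|Hcd] := boolP (isp c && isp d); last by rewrite sY ?mulr0.
      case/andP: Hcd => /ispP[k ->] /ispP[l ->].
      by rewrite /rt F4 (Has o0 o1) F4 oppr0 !mulr0 !mul0r.
    clearbody rt; move=> A B HAB; rewrite mxE; case: eqP => // Hw; move: Hw HAB.
    case: (ordP3 A) => [->|[->|[a ->]]]; case: (ordP3 B) => [->|[->|[b ->]]];
      rewrite ?wtE => Hw HAB;
      first [by exfalso; lia | by [] | idtac].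
    1-2: rewrite LrE ?sg0 ?sg1 big1 // => c _; rewrite big1 // => d _; by case: (Hrt c d).
  - by move=> Y [sY _]; exact: SO_sg.
have F5 : forall i j k l, tau (sp i) (sp j) (sp k) (sp l) = 0.
  move=> i j k l.
  have tD : (dmx (sp k) (sp l) (-1))^T = - dmx (sp k) (sp l) (-1).
    by rewrite dmx_tr ?mulrNN ?mulr1 // scaleN1r.
  have := T0 _ (dmx_SO _ _ _) tD; move/matrixP/(_ (sp i) (sp j)).
  rewrite !mxE wtss eqxx !sgsp sum_dmx /rt.
  have a1 := Has2 (sp i) (sp j) (sp k) (sp l).
  lra.
pose Zs := (F1, F3, F4, F5, Zaa, Zcc).
move=> A B C D.
case: (ordP3 A) => [->|[->|[a ->]]]; case: (ordP3 B) => [->|[->|[b ->]]];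
case: (ordP3 C) => [->|[->|[c ->]]]; case: (ordP3 D) => [->|[->|[d ->]]];
rewrite bwE ?wtE => Hw; (try by exfalso; lia);
first [ by rewrite Zs ?oppr0
      | by rewrite Has Zs ?oppr0
      | by rewrite Has2 Zs ?oppr0
      | by rewrite Has Has2 Zs ?oppr0
      | by rewrite Hpr Zs ?oppr0
      | by rewrite Hpr Has Zs ?oppr0
      | by rewrite Hpr Has2 Zs ?oppr0
      | by rewrite Hpr Has Has2 Zs ?oppr0 ].
Qed.

Local Notation eta := (null_gram R n).

Lemma eta_sg A B : eta A B = (B == sg A)%:R.
Proof.
rewrite mxE.
case: (ordP3 A) => [->|[->|[i ->]]]; case: (ordP3 B) => [->|[->|[j ->]]] //;
  rewrite ?sgsp ?spE //=.
have -> : (1 < bump 0 (bump 0 i))%N by [].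
by rewrite andbT eq_sym; case: (j == i).
Qed.

Lemma sum_eta_l (f : 'I_N -> R) A : \sum_i eta A i * f i = f (sg A).
Proof.
rewrite (bigD1 (sg A)) //= eta_sg eqxx mul1r big1 ?addr0 // => i /negbTE Hi.
by rewrite eta_sg Hi mul0r.
Qed.

Lemma eta_symE A B : eta A B = eta B A.
Proof.
by rewrite !eta_sg [A == _]eq_sym (can2_eq sgK sgK).
Qed.

Lemma sum_eta_r (f : 'I_N -> R) B : \sum_i f i * eta i B = f (sg B).
Proof.
rewrite -(sum_eta_l f B); apply: eq_bigr => i _; by rewrite mulrC eta_symE.
Qed.

Lemma eta_tr : eta^T = eta.
Proof. by apply/matrixP => A B; rewrite mxE eta_symE. Qed.

Lemma eta_conj (X : 'M[R]_N) A B : (eta *m X *m eta) A B = X (sg A) (sg B).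
Proof.
rewrite mxE (eq_bigr (fun j => X (sg A) j * eta j B)); first by rewrite sum_eta_r.
by move=> j _; rewrite mxE sum_eta_l.
Qed.

Lemma eta_mul : eta *m eta = 1%:M.
Proof.
apply/matrixP => A B; rewrite mxE sum_eta_l eta_sg !mxE.
by rewrite sgK eq_sym.
Qed.

Definition Tm (U : tensor4 R n) (F : 'M[R]_N) : 'M[R]_N :=
  \matrix_(e, f) \sum_c \sum_d U e f c d * F c d.

Lemma Lr_Tm rho F : Lr rho F = eta *m Tm rho F *m eta.
Proof. by apply/matrixP => A B; rewrite eta_conj !mxE. Qed.

Lemma frame_compE (U : tensor4 R n) (E : 'M[R]_N) A B C D :
  frame_comp U E A B C D =
  \sum_a \sum_b \sum_c \sum_d U a b c d * E a A * E b B * E c C * E d D.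
Proof. by []. Qed.

Lemma contract2 (U : tensor4 R n) (E F : 'M[R]_N) a b :
  \sum_c \sum_d U a b c d * (E *m F *m E^T) c d =
  \sum_C \sum_D (\sum_c \sum_d U a b c d * E c C * E d D) * F C D.
Proof.
transitivity (\sum_c \sum_d \sum_C \sum_D U a b c d * E c C * E d D * F C D).
  apply: eq_bigr => c _; apply: eq_bigr => d _.
  rewrite mxE mulr_sumr exchange_big; apply: eq_bigr => C _.
  rewrite mxE mulr_suml mulr_sumr; apply: eq_bigr => D _; rewrite mxE; ring.
rewrite exch4; apply: eq_bigr => C _; apply: eq_bigr => D _.
rewrite mulr_suml; apply: eq_bigr => c _; by rewrite mulr_suml.
Qed.

Lemma frame_contract (U : tensor4 R n) (E F : 'M[R]_N) X Y :
  \sum_C \sum_D frame_comp U E X Y C D * F C D =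
  (E^T *m Tm U (E *m F *m E^T) *m E) X Y.
Proof.
transitivity (\sum_C \sum_D \sum_a \sum_b E a X * E b Y *
   (\sum_c \sum_d U a b c d * E c C * E d D) * F C D).
  apply: eq_bigr => C _; apply: eq_bigr => D _.
  rewrite frame_compE mulr_suml; apply: eq_bigr => a _.
  rewrite mulr_suml; apply: eq_bigr => b _.
  congr (_ * _); rewrite mulr_sumr; apply: eq_bigr => c _.
  rewrite mulr_sumr; apply: eq_bigr => d _; ring.
rewrite exch4 mxE exchange_big; apply: eq_bigr => a _.
rewrite mxE mulr_suml; apply: eq_bigr => b _.
rewrite !mxE contract2 mulr_sumr mulr_suml; apply: eq_bigr => C _.
rewrite mulr_sumr mulr_suml; apply: eq_bigr => D _; ring.
Qed.



Lemma gen_mx (gi : 'M[R]_N) (U : tensor4 R n) (F : 'M[R]_N) a b :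
  \sum_e \sum_f \sum_c \sum_d gi a e * gi b f * U e f c d * F c d =
  (gi *m Tm U F *m gi^T) a b.
Proof.
rewrite mxE exchange_big; apply: eq_bigr => e _.
rewrite mxE mulr_suml; apply: eq_bigr => f _.
rewrite !mxE mulr_sumr mulr_suml; apply: eq_bigr => c _.
rewrite mulr_sumr mulr_suml; apply: eq_bigr => d _; ring.
Qed.

Lemma Top_mx (G : 'M[R]_N) (T : tensor4 R n) F :
  Top G T F = 2^-1 *: (invmx G *m Tm T F *m (invmx G)^T).
Proof. by apply/matrixP => a b; rewrite [LHS]mxE [RHS]mxE -gen_mx. Qed.

Definition Tp (T : tensor4 R n) : tensor4 R n := fun e f c d => T e c f d.

Lemma Tsop_mx (G : 'M[R]_N) (T : tensor4 R n) Z :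
  Tsop G T Z = invmx G *m Tm (Tp T) Z *m (invmx G)^T.
Proof. by apply/matrixP => a b; rewrite [LHS]mxE -gen_mx. Qed.

Lemma frame_Tp (T : tensor4 R n) E X Y C D :
  frame_comp (Tp T) E X Y C D = frame_comp T E X C Y D.
Proof.
rewrite !frame_compE; apply: eq_bigr => a _; rewrite exchange_big.
apply: eq_bigr => b _; apply: eq_bigr => c _; apply: eq_bigr => d _.
rewrite /Tp; ring.
Qed.

Lemma frame_sym (T : tensor4 R n) E : riemann_like_sym T ->
  riemann_like_sym (frame_comp T E).
Proof.
move=> [Has Hpr]; split.
- move=> A B C D; rewrite !frame_compE [in RHS]exchange_big -sumrN.
  apply: eq_bigr => a _; rewrite -sumrN; apply: eq_bigr => b _.
  rewrite -sumrN; apply: eq_bigr => c _; rewrite -sumrN; apply: eq_bigr => d _.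
  rewrite (Has b a); ring.
- move=> A B C D; rewrite !frame_compE [in RHS]exch4.
  apply: eq_bigr => a _; apply: eq_bigr => b _.
  apply: eq_bigr => c _; apply: eq_bigr => d _.
  rewrite (Hpr c d); ring.
Qed.

Lemma gi_eq (G E : 'M[R]_N) : null_frame G E ->
  E \in unitmx /\ invmx G = E *m eta *m E^T.
Proof.
rewrite /null_frame => HE.
have H1 : E^T *m (G *m E *m eta) = 1%:M.
  by rewrite !mulmxA HE eta_mul.
have [EtU _] := mulmx1_unit H1.
have H2 : G *m (E *m eta *m E^T) = 1%:M.
  by rewrite !mulmxA; exact: (mulmx1C H1).
have [GU _] := mulmx1_unit H2.
split; first by rewrite -unitmx_tr.
by rewrite -[LHS]mulmx1 -H2 (mulKmx GU).
Qed.

Lemma Top_conj (G E : 'M[R]_N) (T : tensor4 R n) F : null_frame G E ->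
  Top G T (E *m F *m E^T) =
  E *m Lr (fun A B c d => 2^-1 * frame_comp T E A B c d) F *m E^T.
Proof.
move=> HE; have [Eu Hgi] := gi_eq _ _ HE.
have HT : Tm (fun A B c d => 2^-1 * frame_comp T E A B c d) F =
    2^-1 *: (E^T *m Tm T (E *m F *m E^T) *m E).
  apply/matrixP => X Y; rewrite [LHS]mxE [RHS]mxE -frame_contract mulr_sumr.
  apply: eq_bigr => C _; rewrite mulr_sumr; apply: eq_bigr => D _; ring.
rewrite Top_mx Hgi Lr_Tm HT.
have Hgt : (E *m eta *m E^T)^T = E *m eta *m E^T.
  by rewrite !trmx_mul trmxK eta_tr mulmxA.
rewrite Hgt -scalemxAr -scalemxAl -scalemxAr -scalemxAl; congr (_ *: _).
by rewrite !mulmxA.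
Qed.

Lemma Tsop_conj (G E : 'M[R]_N) (T : tensor4 R n) F : null_frame G E ->
  Tsop G T (E *m F *m E^T) =
  E *m Lr (fun A B c d => frame_comp T E A c B d) F *m E^T.
Proof.
move=> HE; have [Eu Hgi] := gi_eq _ _ HE.
have HT : Tm (fun A B c d => frame_comp T E A c B d) F =
    E^T *m Tm (Tp T) (E *m F *m E^T) *m E.
  apply/matrixP => X Y; rewrite [LHS]mxE -frame_contract.
  apply: eq_bigr => C _; apply: eq_bigr => D _; by rewrite frame_Tp.
rewrite Tsop_mx Hgi Lr_Tm HT.
have Hgt : (E *m eta *m E^T)^T = E *m eta *m E^T.
  by rewrite !trmx_mul trmxK eta_tr mulmxA.
by rewrite Hgt !mulmxA.
Qed.

Lemma iter_conj (E : 'M[R]_N) (f g : 'M[R]_N -> 'M[R]_N) k F :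
  (forall X, f (E *m X *m E^T) = E *m g X *m E^T) ->
  iter k f (E *m F *m E^T) = E *m iter k g F *m E^T.
Proof. move=> H; elim: k => //= k ->; exact: H. Qed.

Lemma conj0 (E X : 'M[R]_N) : E \in unitmx -> E *m X *m E^T = 0 -> X = 0.
Proof.
move=> Eu H; have EtU : E^T \in unitmx by rewrite unitmx_tr.
rewrite -(mulKmx Eu X) -(mulmxK EtU (E *m X)) H.
by rewrite mul0mx mulmx0.
Qed.

Lemma conj_tr (E X : 'M[R]_N) : (E *m X *m E^T)^T = E *m X^T *m E^T.
Proof. by rewrite !trmx_mul trmxK mulmxA. Qed.


Lemma prop2_sec (G : 'M[R]_n.+2) (T : tensor4 R n) :
  lorentzian G ->
  riemann_like_sym T ->
  (exists E : 'M[R]_n.+2, null_frame G E /\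
     forall A B C D : 'I_n.+2, (0 < boost_weight A B C D)%R ->
       frame_comp T E A B C D = 0) ->
  Top_nilpotent G T ->
  Tsop_nilpotent G T ->
  exists E : 'M[R]_n.+2, null_frame G E /\
    forall A B C D : 'I_n.+2,
      boost_weight A B C D = 0%R \/ boost_weight A B C D = 1%R \/
      boost_weight A B C D = 2%R ->
      frame_comp T E A B C D = 0.
Proof.
move=> _ Hsym [E [HE H2]] [k1 Hk1] [k2 Hk2].
have [Eu _] := gi_eq _ _ HE.
exists E; split => //.
have B0 : forall A B C D, boost_weight A B C D = 0 -> frame_comp T E A B C D = 0.
  apply: (@partB (frame_comp T E) k1 k2 (frame_sym _ E Hsym) H2).
  - move=> F HF; apply: (@conj0 E _ Eu).
    rewrite -(@iter_conj E _ _ k1 F (fun X => Top_conj _ _ T X HE)) Hk1 //.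
    by rewrite conj_tr HF mulmxN mulNmx.
  - move=> Z HZ; apply: (@conj0 E _ Eu).
    rewrite -(@iter_conj E _ _ k2 Z (fun X => Tsop_conj _ _ T X HE)) Hk2 //.
    by rewrite conj_tr HZ.
move=> A B C D [H|[H|H]]; first exact: B0.
- by apply: H2; rewrite H.
- by apply: H2; rewrite H.
Qed.


End PartB.


Theorem proposition2 (R : realType) (n : nat) (G : 'M[R]_n.+2) (T : tensor4 R n) :
  lorentzian G ->
  riemann_like_sym T ->
  (exists E : 'M[R]_n.+2, null_frame G E /\
     forall A B C D : 'I_n.+2, (0 < boost_weight A B C D)%R ->
       frame_comp T E A B C D = 0) ->
  Top_nilpotent G T ->
  Tsop_nilpotent G T ->
  exists E : 'M[R]_n.+2, null_frame G E /\
    forall A B C D : 'I_n.+2,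
      boost_weight A B C D = 0%R \/ boost_weight A B C D = 1%R \/
      boost_weight A B C D = 2%R ->
      frame_comp T E A B C D = 0.
Proof. exact: prop2_sec. Qed.
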